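(* Let $\Omega\subset\mathbb{R}^d$ ($d\in\{2,3\}$) be a bounded polytopal Lipschitz domain, $\mathcal{T}_h$ a simplicial mesh of $\Omega$, $\alpha,\tau>0$, $k>0$, and let $\mathbf{m}_h^0\in\mathcal{M}_h$ and $\mathbf{v}_h^0\in\mathcal{K}_h[\mathbf{m}_h^0]$. Consider the nonlinear angular momentum method (defined in the context) and let $i\in\mathbb{N}_0$. Suppose that for each $n=0,\dots,i$, the pair $(\mathbf{m}_h^{n+1},\mathbf{w}_h^{n+1})\in\mathcal{S}^1(\mathcal{T}_h)^3\times\mathcal{S}^1(\mathcal{T}_h)^3$ satisfies the defining equations of the method at step $n$. Then $\mathbf{m}_h^{i+1}\in\mathcal{M}_h$ and $\mathbf{w}_h^{i+1}\in\mathcal{K}_h[\mathbf{m}_h^{i+1}]$.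
   Context: Let $\mathcal{N}_h$ be the set of vertices of $\mathcal{T}_h$ and $\mathcal{S}^1(\mathcal{T}_h)$ the space of continuous, piecewise affine functions on $\mathcal{T}_h$. The nodal hat functions are $\{\varphi_z\}_{z\in\mathcal{N}_h}$ with $\varphi_z(z')=\delta_{zz'}$. Let $\mathcal{I}_h$ denote the nodal interpolant onto $\mathcal{S}^1(\mathcal{T}_h)$, applied componentwise for vector fields. The mass-lumped product is $(\boldsymbol\psi,\boldsymbol\phi)_h=\int_\Omega\mathcal{I}_h[\boldsymbol\psi\cdot\boldsymbol\phi]$ for continuous $\boldsymbol\psi,\boldsymbol\phi:\overline\Omega\to\mathbb{R}^3$, and $\|\cdot\|_h$ is the induced norm. The effective field $\mathbf{h}_{\rm eff}[\mathbf{m}]\in\mathbf{H}^1(\Omega)^*$ is defined by $\langle\mathbf{h}_{\rm eff}[\mathbf{m}],\boldsymbol\phi\rangle=-(\nabla\mathbf{m},\nabla\boldsymbol\phi)_{L^2(\Omega)}$. The map $\mathbf{P}_h:\mathbf{H}^1(\Omega)^*\to\mathcal{S}^1(\mathcal{T}_h)^3$ is defined by $(\mathbf{P}_h\mathbf{u},\boldsymbol\phi_h)_h=\langle\mathbf{u},\boldsymbol\phi_h\rangle$ for all $\boldsymbol\phi_h\in\mathcal{S}^1(\mathcal{T}_h)^3$. Let $\mathcal{M}_h=\{\boldsymbol\phi_h\in\mathcal{S}^1(\mathcal{T}_h)^3:|\boldsymbol\phi_h(z)|=1\ \forall z\in\mathcal{N}_h\}$. For $\boldsymbol\psi_h\in\mathcal{S}^1(\mathcal{T}_h)^3$,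 let $\mathcal{K}_h[\boldsymbol\psi_h]=\{\boldsymbol\phi_h\in\mathcal{S}^1(\mathcal{T}_h)^3:\boldsymbol\psi_h(z)\cdot\boldsymbol\phi_h(z)=0\ \forall z\in\mathcal{N}_h\}$. Notation: $d_t\phi^{i+1}=(\phi^{i+1}-\phi^i)/k$ and $\phi^{i+1/2}=(\phi^{i+1}+\phi^i)/2$. Nonlinear angular momentum method: set $\mathbf{w}_h^0=\mathcal{I}_h[\mathbf{m}_h^0\times\mathbf{v}_h^0]$. For each $i\in\mathbb{N}_0$, find $(\mathbf{m}_h^{i+1},\mathbf{w}_h^{i+1})$ such that for all $\boldsymbol\phi_h,\boldsymbol\psi_h\in\mathcal{S}^1(\mathcal{T}_h)^3$: $$(d_t\mathbf{m}_h^{i+1},\boldsymbol\phi_h)_h=-(\mathbf{m}_h^{i+1/2}\times\mathbf{w}_h^{i+1/2},\boldsymbol\phi_h)_h,$$ $$\tau(d_t\mathbf{w}_h^{i+1},\boldsymbol\psi_h)_h=(\mathbf{m}_h^{i+1/2}\times\mathbf{P}_h\mathbf{h}_{\rm eff}[\mathbf{m}_h^{i+1/2}],\boldsymbol\psi_h)_h-\alpha(\mathbf{m}_h^{i+1/2}\times d_t\mathbf{m}_h^{i+1},\boldsymbol\psi_h)_h-(\mathbf{m}_h^{i+1/2}\times\mathbf{w}_h^{i+1/2},\boldsymbol\psi_h)_h.$$ *)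

(* Defs.v *)
From HB Require Import structures.
From mathcomp Require Import all_boot all_order all_algebra.
From mathcomp Require Import reals.
Set Implicit Arguments. Unset Strict Implicit. Unset Printing Implicit Defensive.
Import Order.TTheory GRing.Theory Num.Theory.
Local Open Scope ring_scope.

Definition dot3 {R : realType} (a b : 'rV[R]_3) : R := \sum_(c < 3) a 0 c * b 0 c.

Definition i0_3 : 'I_3 := @Ordinal 3 0 isT.
Definition i1_3 : 'I_3 := @Ordinal 3 1 isT.
Definition i2_3 : 'I_3 := @Ordinal 3 2 isT.

Definition cross3 {R : realType} (a b : 'rV[R]_3) : 'rV[R]_3 :=
  \row_(c < 3)
    (if nat_of_ord c == 0%N then a 0 i1_3 * b 0 i2_3 - a 0 i2_3 * b 0 i1_3
     else if nat_of_ord c == 1%N then a 0 i2_3 * b 0 i0_3 - a 0 i0_3 * b 0 i2_3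
     else a 0 i0_3 * b 0 i1_3 - a 0 i1_3 * b 0 i0_3).

Definition norm3 {R : realType} (a : 'rV[R]_3) : R := Num.sqrt (dot3 a a).

(* A mesh is given by its vertices (indexed by 'I_nv, with coordinates *)
(* coord v in R^d) and its elements (indexed by 'I_ne); element K is   *)
(* the closed d-simplex with vertices coord (elt K j), j < d+1.        *)
(* The domain Omega is the union of the elements.                      *)
Record mesh (R : realType) (d : nat) := Mesh {
  nv : nat;
  ne : nat;
  coord : 'I_nv -> 'rV[R]_d;
  elt : 'I_ne -> 'I_d.+1 -> 'I_nv }.

Arguments coord {R d} m _.
Arguments elt {R d} m _ _.

Section MeshDefs.
Context {R : realType} {d : nat} (T : mesh R d).

Definition edge_mx (K : 'I_(ne T)) : 'M[R]_d :=
  \matrix_(j < d, l < d)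
    (coord T (elt T K (lift ord0 j)) - coord T (elt T K ord0)) 0 l.

Definition vol (K : 'I_(ne T)) : R := `|\det (edge_mx K)| / (d`!)%:R.

Definition verts (K : 'I_(ne T)) : pred 'I_(nv T) :=
  [pred v | v \in codom (elt T K)].

Definition in_hull (S : pred 'I_(nv T)) (x : 'rV[R]_d) : Prop :=
  exists lam : 'I_(nv T) -> R,
    [/\ forall v, 0 <= lam v,
        forall v, ~~ S v -> lam v = 0,
        \sum_v lam v = 1 &
        x = \sum_v lam v *: coord T v].

Definition is_simplicial_mesh : Prop :=
  [/\ injective (coord T),
      forall K, \det (edge_mx K) != 0,
      forall v, exists K j, elt T K j = v,
      forall K K', verts K =i verts K' -> K = K' &
      forall K K' x, in_hull (verts K) x -> in_hull (verts K') x ->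
        in_hull (predI (verts K) (verts K')) x              (* conformity: K ∩ K' is a common face *)
  ].

(* Elements of S^1(T_h)^3 are represented by their nodal values. *)
Definition S1 := 'I_(nv T) -> 'rV[R]_3.

(* constant gradient on K of the piecewise affine field with nodal values u:
   the affine map x |-> u(z_{K,0}) + (x - z_{K,0}) G with G : d x 3,
   i.e. G = B^{-1} D (transpose of the Jacobian). *)
Definition grad (K : 'I_(ne T)) (u : S1) : 'M[R]_(d, 3) :=
  invmx (edge_mx K) *m
  \matrix_(j < d, c < 3) (u (elt T K (lift ord0 j)) - u (elt T K ord0)) 0 c.

(* (grad u, grad v)_{L^2(Omega)} for u, v in S^1(T_h)^3
   (exact integral of the elementwise constant integrand) *)
Definition stiff (u v : S1) : R :=
  \sum_(K < ne T) vol K * \sum_(j < d) \sum_(c < 3) grad K u j c * grad K v j c.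

(* int_Omega I_h[f] for nodal values f : the integral of the continuous
   piecewise affine function with nodal values f (exact: on each simplex
   the integral of an affine function is |K| times the mean of its
   vertex values) *)
Definition int_Ih (f : 'I_(nv T) -> R) : R :=
  \sum_(K < ne T) vol K / (d.+1)%:R * \sum_(j < d.+1) f (elt T K j).

(* mass-lumped product (psi, phi)_h = int_Omega I_h[psi . phi];
   it only depends on the nodal values of psi and phi. *)
Definition lumped (psi phi : S1) : R := int_Ih (fun z => dot3 (psi z) (phi z)).

Definition Mh (phi : S1) : Prop := forall z, norm3 (phi z) = 1.
Definition Kh (psi phi : S1) : Prop := forall z, dot3 (psi z) (phi z) = 0.

(* nodal cross product (nodal values of I_h[psi x phi]) *)
Definition crossh (psi phi : S1) : S1 := fun z => cross3 (psi z) (phi z).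

Definition dtime (k : R) (f : nat -> S1) (n : nat) : S1 :=
  fun z => k^-1 *: (f n.+1 z - f n z).
Definition halfstep (f : nat -> S1) (n : nat) : S1 :=
  fun z => 2^-1 *: (f n.+1 z + f n z).

(* (m^{n+1}, w^{n+1}) satisfies the defining equations of the nonlinear
   angular momentum method at step n.  p plays the role of
   P_h h_eff[m^{n+1/2}], characterised by its defining relation
   (p, phi)_h = <h_eff[m^{n+1/2}], phi> = -(grad m^{n+1/2}, grad phi). *)
Definition angmom_step (alpha tau k : R) (m w : nat -> S1) (n : nat) : Prop :=
  let mh := halfstep m n in
  let wh := halfstep w n in
  exists p : S1,
    [/\ forall phi : S1, lumped p phi = - stiff mh phi,
        forall phi : S1,
          lumped (dtime k m n) phi = - lumped (crossh mh wh) phi &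
        forall psi : S1,
          tau * lumped (dtime k w n) psi =
            lumped (crossh mh p) psi
            - alpha * lumped (crossh mh (dtime k m n)) psi
            - lumped (crossh mh wh) psi].

End MeshDefs.

(* Main.v *)
Require Import Defs.
From HB Require Import structures.
From mathcomp Require Import all_boot all_order all_algebra.
From mathcomp Require Import reals.
From mathcomp Require Import ring lra.
Import Order.TTheory GRing.Theory Num.Theory.
Local Open Scope ring_scope.

Section Aux.
Context {R : realType}.

Lemma dot3E (a b : 'rV[R]_3) :
  dot3 a b = a 0 i0_3 * b 0 i0_3 + a 0 i1_3 * b 0 i1_3 + a 0 i2_3 * b 0 i2_3.
Proof.
rewrite /dot3 !big_ord_recl big_ord0 addr0 addrA /=.
have -> : (lift ord0 (lift ord0 (ord0 : 'I_1)) : 'I_3) = i2_3 by apply: val_inj.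
have -> : (lift ord0 (ord0 : 'I_2) : 'I_3) = i1_3 by apply: val_inj.
have -> : (ord0 : 'I_3) = i0_3 by apply: val_inj.
by [].
Qed.

Lemma cross3E0 (a b : 'rV[R]_3) :
  cross3 a b 0 i0_3 = a 0 i1_3 * b 0 i2_3 - a 0 i2_3 * b 0 i1_3.
Proof. by rewrite /cross3 mxE. Qed.
Lemma cross3E1 (a b : 'rV[R]_3) :
  cross3 a b 0 i1_3 = a 0 i2_3 * b 0 i0_3 - a 0 i0_3 * b 0 i2_3.
Proof. by rewrite /cross3 mxE. Qed.
Lemma cross3E2 (a b : 'rV[R]_3) :
  cross3 a b 0 i2_3 = a 0 i0_3 * b 0 i1_3 - a 0 i1_3 * b 0 i0_3.
Proof. by rewrite /cross3 mxE. Qed.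

Lemma dot3_ge0 (a : 'rV[R]_3) : 0 <= dot3 a a.
Proof. by rewrite /dot3; apply: sumr_ge0 => c _; rewrite -expr2 sqr_ge0. Qed.

Lemma dot3_0r (a : 'rV[R]_3) : dot3 a 0 = 0.
Proof. by rewrite /dot3 big1 // => c _; rewrite mxE mulr0. Qed.

Variables (d : nat) (T : mesh R d).

Definition W (z : 'I_(nv T)) : R :=
  \sum_(K < ne T) vol K / (d.+1)%:R * \sum_(j < d.+1) ((elt T K j == z)%:R : R).

Lemma int_Ih_delta (f : 'I_(nv T) -> R) z :
  (forall y, y != z -> f y = 0) -> int_Ih f = f z * W z.
Proof.
move=> Hf; rewrite /int_Ih /W mulr_sumr; apply: eq_bigr => K _.
rewrite mulrCA; congr (_ * _); rewrite mulr_sumr; apply: eq_bigr => j _.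
case: eqP => [->|/eqP ne]; first by rewrite mulr1.
by rewrite Hf // mulr0.
Qed.

Lemma lumped_delta (psi : S1 T) z e :
  lumped psi (fun y => if y == z then e else 0) = dot3 (psi z) e * W z.
Proof.
rewrite /lumped (int_Ih_delta _ z); first by rewrite eqxx.
by move=> y /negbTE ->; exact: dot3_0r.
Qed.

Lemma W_gt0 z : is_simplicial_mesh T -> 0 < W z.
Proof.
case=> _ Hdet Hcov _ _.
have volp (K1 : 'I_(ne T)) : 0 < vol K1 / (d.+1)%:R.
  by rewrite /vol !divr_gt0 // ?normr_gt0 ?Hdet // ?ltr0n ?fact_gt0.
have ge0 (K1 : 'I_(ne T)) : 0 <= vol K1 / (d.+1)%:R * \sum_(j < d.+1) ((elt T K1 j == z)%:R : R).
  by apply: mulr_ge0; [exact: ltW | apply: sumr_ge0 => j _; rewrite ler0n].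
case: (Hcov z) => K [j Hj].
rewrite /W (bigD1 K) //=; apply: ltr_wpDr; first (apply: sumr_ge0 => K1 _; exact: ge0).
apply: mulr_gt0 => //.
rewrite (bigD1 j) //= Hj eqxx; apply: ltr_wpDr => //.
by apply: sumr_ge0 => j' _; rewrite ler0n.
Qed.

End Aux.

Section Alg.
Context {R : realType}.
Implicit Types (a b : 'rV[R]_3).

Lemma alg_norm (a a' b b' : 'rV[R]_3) (k : R) : k != 0 ->
  dot3 (k^-1 *: (a' - a)) (2^-1 *: (a' + a)) =
  - dot3 (cross3 (2^-1 *: (a' + a)) (2^-1 *: (b' + b))) (2^-1 *: (a' + a)) ->
  dot3 a' a' = dot3 a a.
Proof.
move=> k0 /eqP; rewrite -subr_eq0 => /eqP E.
have : k^-1 * 2^-1 * (dot3 a' a' - dot3 a a) = 0.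
  rewrite -E !dot3E !cross3E0 !cross3E1 !cross3E2 !mxE; ring.
move/eqP; rewrite !mulf_eq0 !invr_eq0 (negbTE k0) pnatr_eq0 /= subr_eq0.
by move/eqP.
Qed.

Lemma alg_orth (a a' b b' p : 'rV[R]_3) (k tau alpha : R) : k != 0 -> tau != 0 ->
  dot3 (k^-1 *: (a' - a)) (2^-1 *: (b' + b)) =
  - dot3 (cross3 (2^-1 *: (a' + a)) (2^-1 *: (b' + b))) (2^-1 *: (b' + b)) ->
  tau * dot3 (k^-1 *: (b' - b)) (2^-1 *: (a' + a)) =
    dot3 (cross3 (2^-1 *: (a' + a)) p) (2^-1 *: (a' + a))
    - alpha * dot3 (cross3 (2^-1 *: (a' + a)) (k^-1 *: (a' - a))) (2^-1 *: (a' + a))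
    - dot3 (cross3 (2^-1 *: (a' + a)) (2^-1 *: (b' + b))) (2^-1 *: (a' + a)) ->
  dot3 a b = 0 -> dot3 a' b' = 0.
Proof.
move=> k0 t0 E2 E3 hab.
have HX : dot3 (k^-1 *: (a' - a)) (2^-1 *: (b' + b)) = 0.
  rewrite E2 !dot3E !cross3E0 !cross3E1 !cross3E2 !mxE; ring.
have HY : dot3 (k^-1 *: (b' - b)) (2^-1 *: (a' + a)) = 0.
  have : tau * dot3 (k^-1 *: (b' - b)) (2^-1 *: (a' + a)) = 0.
    rewrite E3 !dot3E !cross3E0 !cross3E1 !cross3E2 !mxE; ring.
  by move/eqP; rewrite mulf_eq0 (negbTE t0) /= => /eqP.
have Id : dot3 a' b' = dot3 a b + k * (dot3 (k^-1 *: (a' - a)) (2^-1 *: (b' + b))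
             + dot3 (k^-1 *: (b' - b)) (2^-1 *: (a' + a))).
  rewrite !dot3E !mxE; field.
  exact: k0.
by rewrite Id HX HY hab; ring.
Qed.

End Alg.

Lemma cancelW {R : realType} {d : nat} (T : mesh R d) (HT : is_simplicial_mesh T)
  (z : 'I_(nv T)) (x y : R) : x * @W R d T z = y * @W R d T z -> x = y.
Proof. by apply: mulIf; rewrite gt_eqF // W_gt0. Qed.

Theorem proposition3p3 (R : realType) (d : nat) (hd : d = 2%N \/ d = 3%N)
  (T : mesh R d) (HT : is_simplicial_mesh T)
  (alpha tau k : R) (halpha : 0 < alpha) (htau : 0 < tau) (hk : 0 < k)
  (m0 v0 : S1 T) (Hm0 : Mh m0) (Hv0 : Kh m0 v0)
  (m w : nat -> S1 T)
  (Hm_init : m 0%N = m0) (Hw_init : w 0%N = crossh m0 v0)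
  (i : nat)
  (Hsteps : forall n, (n <= i)%N -> angmom_step alpha tau k m w n) :
  Mh (m i.+1) /\ Kh (m i.+1) (w i.+1).
Proof.
have key : forall n, (n <= i.+1)%N -> forall z,
    dot3 (m n z) (m n z) = 1 /\ dot3 (m n z) (w n z) = 0.
  elim=> [_ z|n IH hn z].
    rewrite Hm_init Hw_init /crossh; split.
      have := Hm0 z; rewrite /norm3 => h.
      by rewrite -(sqr_sqrtr (dot3_ge0 _)) h expr1n.
    rewrite !dot3E !cross3E0 !cross3E1 !cross3E2; ring.
  have [IH1 IH2] := IH (ltnW hn) z.
  have [p [H1 H2 H3]] := Hsteps n hn.
  pose del (e : 'rV[R]_3) : S1 T := fun y => if y == z then e else 0.
  have E1 := H2 (del (halfstep m n z)).
  have E2 := H2 (del (halfstep w n z)).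
  have E3 := H3 (del (halfstep m n z)).
  rewrite !lumped_delta -mulNr in E1.
  rewrite !lumped_delta -mulNr in E2.
  rewrite !lumped_delta mulrA (mulrA alpha) -mulrBl -mulrBl in E3.
  move: (cancelW T HT _ _ _ E1) (cancelW T HT _ _ _ E2) (cancelW T HT _ _ _ E3).
  rewrite /halfstep /dtime /crossh => F1 F2 F3.
  split.
    by rewrite (alg_norm _ _ _ _ _ (lt0r_neq0 hk) F1) IH1.
  exact: (alg_orth _ _ _ _ _ _ _ _ (lt0r_neq0 hk) (lt0r_neq0 htau) F2 F3 IH2).
split=> z; have [h1 h2] := key i.+1 (leqnn _) z => //.
by rewrite /norm3 h1 sqrtr1.
Qed.
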